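(* Let $\rho$ be a $(0,\infty)$-valued random variable with $\mathbb E\rho=1$, let $K\in(0,\infty)$, and $g(x)=\mathbb E\big[\frac{K\rho+x}{1+(K\rho+x)}\big]$, $x\in[0,\infty)$. Then $g$ has a unique fixed point $M\in(0,1)$, and $g$ is a strict contraction around $M$: there is $\beta\in(0,1)$ with $0\le\frac{g(x)-M}{x-M}\le\beta$ for all $x\in[0,\infty)\setminus\{M\}$ (one may take $\beta=1-g(0)/M$). *)

(* Defs.v *)
From HB Require Import structures.
From mathcomp Require Import all_boot all_order all_algebra.
From mathcomp Require Import all_classical all_reals all_analysis.
Set Implicit Arguments. Unset Strict Implicit. Unset Printing Implicit Defensive.
Import Order.TTheory GRing.Theory Num.Theory.
Local Open Scope ring_scope.

Definition gfun (d : measure_display) (T : measurableType d) (R : realType)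
  (P : probability T R) (rho : T -> R) (K x : R) : R :=
  Rintegral P setT (fun t => (K * rho t + x) / (1 + (K * rho t + x))).

(* Main.v *)
Require Import Defs.
From HB Require Import structures.
From mathcomp Require Import all_boot all_order all_algebra.
From mathcomp Require Import all_classical all_reals all_analysis.
From mathcomp Require Import measurable_realfun.
From mathcomp Require Import ring lra.
Import Order.TTheory GRing.Theory Num.Theory.
Import numFieldNormedType.Exports.
Local Open Scope ring_scope.

Section S.
Context (d : measure_display) (T : measurableType d) (R : realType)
  (P : probability T R).

Lemma intb (f : T -> R) : measurable_fun setT f -> (forall t, `|f t| <= 1) ->
  P.-integrable setT (EFin \o f).
Proof.
move=> mf fb; apply/integrableP; split; first exact/measurable_EFinP.
apply: (@le_lt_trans _ _ (1%:E * P setT)%E).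
  apply: (integral_le_bound 1%:E) => //; first exact/measurable_EFinP.
  by apply: aeW => t _ /=; rewrite lee_fin fb.
by rewrite probability_setT mul1e ltry.
Qed.

Lemma Rint_gt0 (f : T -> R) : measurable_fun setT f -> (forall t, 0 < f t) ->
  (forall t, f t <= 1) -> 0 < Rintegral P setT f.
Proof.
move=> mf fp fb.
have fi := intb f mf (fun t => ltac:(rewrite ger0_norm ?fb // ltW //)).
have ge0 : 0 <= Rintegral P setT f by apply: Rintegral_ge0 => t _; exact: ltW.
rewrite lt_neqAle ge0 andbT; apply/eqP => h.
have fin : (\int[P]_(x in setT) (f x)%:E)%E \is a fin_num by exact: integrable_fin_num.
have I0 : (\int[P]_(x in setT) `|(f x)%:E|)%E = 0%E.
  transitivity (\int[P]_(x in setT) (f x)%:E)%E.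
    by apply: eq_integral => t _; rewrite gee0_abs // lee_fin ltW.
  by rewrite -(fineK fin); move: h; rewrite /Rintegral => <-.
have := (ae_eq_integral_abs P measurableT ((measurable_EFinP _ _).2 mf)).1 I0.
move=> ae.
have PF : ProperFilter (almost_everywhere P).
  by apply: ae_properfilter_algebraOfSetsType; rewrite /= probability_setT lte_fin ltr01.
case: (@filter_ex _ (almost_everywhere P) PF _ ae) => t ht.
by move: (ht I); move=> [] /eqP; rewrite gt_eqF.
Qed.

Lemma lip_cont (h : R -> R) : (forall x y, `|h x - h y| <= `|x - y|) -> continuous h.
Proof.
move=> hl x; apply/cvgrPdist_le => e e0.
have : \forall t \near x, `|x - t| <= e := cvgr_dist_le (fun t => t) x cvg_id e e0.
move=> H; near=> t; apply: le_trans (hl _ _) _; near: t; exact: H.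
Unshelve. all: by end_near.
Qed.

Definition psi (u : R) : R := (1 + `|u|)^-1.

Lemma psi_cont : continuous psi.
Proof.
move=> x; apply: (@continuousV _ _ (fun u : R => 1 + `|u|)).
  by rewrite gt_eqF // ltr_wpDr.
apply: continuousD; first exact: cvg_cst.
exact: norm_continuous.
Qed.

Variables (rho : T -> R) (K : R).
Hypothesis rho_meas : measurable_fun setT rho.
Hypothesis rho_pos : forall t, 0 < rho t.
Hypothesis K_pos : 0 < K.

Definition p x t := psi (K * rho t + x).

Lemma mp x : measurable_fun setT (p x).
Proof.
apply: measurableT_comp; first exact: continuous_measurable_fun psi_cont.
apply: measurable_funD => //; apply: measurable_funM => //.
Qed.

Lemma cpos t : 0 < K * rho t.
Proof. exact: mulr_gt0. Qed.

Lemma pE x t : 0 <= x -> p x t = (1 + (K * rho t + x))^-1.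
Proof. by move=> x0; rewrite /p /psi ger0_norm // addr_ge0 // ltW // cpos. Qed.

Lemma p_gt0 x t : 0 <= x -> 0 < p x t.
Proof. by move=> x0; rewrite pE // invr_gt0 ltr_wpDr // addr_ge0 // ltW // cpos. Qed.

Lemma p_lt1 x t : 0 <= x -> p x t < 1.
Proof.
move=> x0; have hc := cpos t; rewrite pE // invf_lt1; lra.
Qed.

Lemma p_le x t : 0 <= x -> p x t <= p 0 t.
Proof.
move=> x0; have hc := cpos t; rewrite !pE // ?lexx // lef_pV2 ?posrE; lra.
Qed.

Lemma p_diff x y t : 0 <= x -> 0 <= y -> p x t - p y t = (y - x) * (p x t * p y t).
Proof.
move=> x0 y0; rewrite !pE //.
have h1 : 1 + (K * rho t + x) != 0 by rewrite gt_eqF // ltr_wpDr // addr_ge0 // ltW // cpos.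
have h2 : 1 + (K * rho t + y) != 0 by rewrite gt_eqF // ltr_wpDr // addr_ge0 // ltW // cpos.
field; by rewrite h1 h2.
Qed.

Lemma p_le1 x t : 0 <= x -> `|p x t| <= 1.
Proof. by move=> x0; rewrite ger0_norm ?ltW ?p_gt0 ?p_lt1. Qed.

Lemma pint x : 0 <= x -> P.-integrable setT (EFin \o p x).
Proof. by move=> x0; apply: intb; [exact: mp | move=> t; exact: p_le1]. Qed.

Lemma mpp x y : measurable_fun setT (fun t => p x t * p y t).
Proof. exact: measurable_funM (mp x) (mp y). Qed.

Lemma pp_bnd x y t : 0 <= x -> 0 <= y -> 0 < p x t * p y t < 1.
Proof.
move=> x0 y0; have h1 := p_gt0 x t x0; have h2 := p_lt1 x t x0.
have h3 := p_gt0 y t y0; have h4 := p_lt1 y t y0.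
apply/andP; split; first exact: mulr_gt0.
nra.
Qed.

Lemma ppint x y : 0 <= x -> 0 <= y -> P.-integrable setT (EFin \o (fun t => p x t * p y t)).
Proof.
move=> x0 y0; apply: intb; first exact: mpp.
by move=> t; have /andP[a b] := pp_bnd x y t x0 y0; rewrite ger0_norm ?ltW.
Qed.

Lemma cint : P.-integrable setT (EFin \o (fun _ : T => (1:R))).
Proof. by apply: intb => // t; rewrite normr1. Qed.

Definition e x := Rintegral P setT (p x).
Definition q x y := Rintegral P setT (fun t => p x t * p y t).

Lemma Rint1 : Rintegral P setT (fun _ => (1:R)) = 1.
Proof. by rewrite Rintegral_cst // /= probability_setT mul1r. Qed.

Lemma gE x : 0 <= x -> gfun P rho K x = 1 - e x.
Proof.
move=> x0; rewrite /gfun /e -[in RHS]Rint1 -RintegralB //; last exact: pint; last exact: cint.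
apply: eq_Rintegral => t _; change (psi (K * rho t + x)) with (p x t); rewrite pE //.
have hc := cpos t.
have h1 : 1 + (K * rho t + x) != 0 by rewrite gt_eqF //; lra.
by field.
Qed.

Lemma e_diff x y : 0 <= x -> 0 <= y -> e x - e y = (y - x) * q x y.
Proof.
move=> x0 y0; rewrite /e /q -RintegralB //; try exact: pint.
rewrite -RintegralZl //; last exact: ppint.
by apply: eq_Rintegral => t _; exact: p_diff.
Qed.

Lemma q_gt0 x y : 0 <= x -> 0 <= y -> 0 < q x y.
Proof.
move=> x0 y0; apply: Rint_gt0; first exact: mpp.
  by move=> t; have /andP[] := pp_bnd x y t x0 y0.
by move=> t; have /andP[_ /ltW] := pp_bnd x y t x0 y0.
Qed.

Lemma q_lt1 x y : 0 <= x -> 0 <= y -> q x y < 1.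
Proof.
move=> x0 y0; rewrite -subr_gt0 /q -Rint1 -RintegralB //; try exact: cint; last exact: ppint.
apply: Rint_gt0.
- by apply: measurable_funB => //; exact: mpp.
- by move=> t; have /andP[a b] := pp_bnd x y t x0 y0; rewrite subr_gt0.
- by move=> t; have /andP[a b] := pp_bnd x y t x0 y0; lra.
Qed.

Lemma q_le x y : 0 <= x -> 0 <= y -> q x y <= q 0 y.
Proof.
move=> x0 y0; apply: le_Rintegral => //; try exact: ppint.
move=> t _; apply: ler_wpM2r; first exact/ltW/p_gt0.
exact: p_le.
Qed.

Lemma e_lt1 x : 0 <= x -> e x < 1.
Proof.
move=> x0; rewrite -subr_gt0 /e -Rint1 -RintegralB //; try exact: cint; last exact: pint.
apply: Rint_gt0.
- exact: measurable_funB (mp x).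
- by move=> t; rewrite subr_gt0 p_lt1.
- by move=> t /=; have h := p_gt0 x t x0; rewrite /p in h; lra.
Qed.

Lemma e_gt0 x : 0 <= x -> 0 < e x.
Proof.
move=> x0; apply: Rint_gt0; first exact: mp.
  by move=> t; exact: p_gt0.
by move=> t; exact/ltW/p_lt1.
Qed.

Lemma eabs_cont : continuous (fun x : R => e `|x|).
Proof.
apply: lip_cont => x y; rewrite e_diff // normrM.
have hq1 := q_lt1 `|x| `|y| (normr_ge0 x) (normr_ge0 y).
have hq0 := q_gt0 `|x| `|y| (normr_ge0 x) (normr_ge0 y).
rewrite (gtr0_norm hq0).
have hd := ler_dist_dist y x; have hd' : `|y - x| = `|x - y| := distrC _ _.
have ha : 0 <= `| `|y| - `|x| | by [].
nra.
Qed.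

Lemma main_sec : exists M : R,
    [/\ 0 < M < 1,
        gfun P rho K M = M,
        (forall y : R, 0 <= y -> gfun P rho K y = y -> y = M) &
        let beta := 1 - gfun P rho K 0 / M in
        0 < beta < 1 /\
        forall x : R, 0 <= x -> x != M ->
          0 <= (gfun P rho K x - M) / (x - M) <= beta].
Proof.
pose f (x : R) := 1 - e `|x| - x.
have fc : continuous f.
  move=> x; apply: (continuousB (f := fun x : R => 1 - e `|x|) (g := id)); last exact: cvg_id.
  by apply: cvgB; [exact: cvg_cst | exact: eabs_cont].
have f0 : 0 < f 0 by rewrite /f normr0 subr0 subr_gt0 e_lt1.
have f1 : f 1 < 0 by rewrite /f normr1 addrAC subrr add0r oppr_lt0 e_gt0.
have [M Mi fM] : exists2 c, c \in `[0, 1] & f c = 0.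
  apply: IVT; first exact: ler01.
    by apply: continuous_subspaceT => x; exact: fc.
  by rewrite ge_min le_max (ltW f1) (ltW f0) orbT.
move: Mi; rewrite in_itv /= => /andP[M0 M1].
have Mn0 : M != 0 by apply/eqP => h; move: fM; rewrite h => fM0; move: f0; rewrite fM0 ltxx.
have Mn1 : M != 1 by apply/eqP => h; move: fM; rewrite h => fM0; move: f1; rewrite fM0 ltxx.
have Mpos : 0 < M by rewrite lt_neqAle eq_sym Mn0.
have Mlt1 : M < 1 by rewrite lt_neqAle Mn1.
have eM : 1 - e M = M by move: fM; rewrite /f ger0_norm //; lra.
have gM : gfun P rho K M = M by rewrite gE.
exists M; split => //.
- by rewrite Mpos Mlt1.
- move=> y y0; rewrite gE // => ey.
  have hd := e_diff M y M0 y0.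
  have hq := q_lt1 M y M0 y0.
  have : (y - M) * (1 - q M y) = 0.
    rewrite mulrBr mulr1 -hd; lra.
  move/eqP; rewrite mulf_eq0 => /orP[/eqP|/eqP]; first lra.
  lra.
- have hb : 1 - gfun P rho K 0 / M = q 0 M.
    rewrite gE //; have hd := e_diff 0 M (lexx 0) M0.
    have -> : e 0 = e M + M * q 0 M by lra.
    have -> : e M = 1 - M by lra.
    by field.
  rewrite /= hb; split; first by rewrite q_gt0 // q_lt1.
  move=> x x0 xM.
  have hd := e_diff x M x0 M0.
  have -> : gfun P rho K x - M = (x - M) * q x M by rewrite gE //; lra.
  rewrite mulrC mulKf ?subr_eq0 //.
  by rewrite (ltW (q_gt0 x M x0 M0)) q_le.
Qed.
End S.

Theorem lemma7p2 (d : measure_display) (T : measurableType d) (R : realType)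
  (P : probability T R) (rho : T -> R) (K : R)
  (rho_meas : measurable_fun setT rho)
  (rho_pos : forall t, 0 < rho t)
  (rho_mean : (\int[P]_t (rho t)%:E = 1%:E)%E)
  (K_pos : 0 < K) :
  exists M : R,
    [/\ 0 < M < 1,
        gfun P rho K M = M,
        (forall y : R, 0 <= y -> gfun P rho K y = y -> y = M) &
        let beta := 1 - gfun P rho K 0 / M in
        0 < beta < 1 /\
        forall x : R, 0 <= x -> x != M ->
          0 <= (gfun P rho K x - M) / (x - M) <= beta].
Proof. exact: main_sec. Qed.
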